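(* Assume the setting below (the iteration (a)–(c)), and assume that every Moore–Penrose pseudoinverse and every denominator occurring in the iteration is well defined, i.e. $\sum_{i=1}^n (W_{k})_{ij}>0$ for all $j$. Then each iteration does not increase the objective: $$L(V_{k+1},U_{k+1},\mu_{k+1})\le L(V_k,U_k,\mu_k)\qquad\text{for all }k\ge 0 .$$
   Context: Setting. Let $X=(x_{ij})$ be an $n\times p$ real matrix and $M=(m_{ij})\in\{0,1\}^{n\times p}$ a missingness indicator ($m_{ij}=0$ means $x_{ij}$ is missing; its numerical value is then arbitrary and irrelevant). Put $m_i=\sum_j m_{ij}$, assumed $\ge 1$ for every $i$, and $m=\sum_i m_i$. Fix constants $\hat\sigma_{1,j}>0$ ($j=1,\dots,p$), $\hat\sigma_2>0$ and an integer $1\le q<p$. For $0<b<c$ and $q_1,q_2>0$ with $q_1\tanh(q_2(c-b))=b$, let $d=b^2/2+(q_1/q_2)\ln\cosh(q_2(c-b))$ and define $\rho_{b,c}(z)=z^2/2$ if $|z|\le b$, $\rho_{b,c}(z)=d-(q_1/q_2)\ln\cosh(q_2(c-|z|))$ if $b\le|z|\le c$, $\rho_{b,c}(z)=d$ if $|z|\ge c$; its derivative is $\psi_{b,c}(z)=z$ for $|z|\le b$, $q_1\tanh(q_2(c-|z|))\,\mathrm{sign}(z)$ for $b\le |z|\le c$, $0$ for $|z|\ge c$. Let $\rho_1=\rho_{b_1,c_1}$ and $\rho_2=\rho_{b_2,c_2}$ be two such functions (each with its own admissible constants), $\psi_k=\rho_k'$, and weight functions $w_k(z)=\psi_k(z)/z$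 for $z\neq0$, $w_k(0)=1$. For $V\in\mathbb R^{p\times q}$ with rows $v_1^T,\dots,v_p^T$, $U\in\mathbb R^{n\times q}$ with rows $u_1^T,\dots,u_n^T$, and $\mu\in\mathbb R^p$, set $\hat x_{ij}=\mu_j+u_i^Tv_j$, $r_{ij}=x_{ij}-\hat x_{ij}$, $\mathrm{rt}_i=\sqrt{\frac1{m_i}\sum_j m_{ij}\hat\sigma_{1,j}^2\rho_1(r_{ij}/\hat\sigma_{1,j})}$ and the objective $$L(V,U,\mu)=\frac{\hat\sigma_2^2}{m}\sum_{i=1}^n m_i\,\rho_2(\mathrm{rt}_i/\hat\sigma_2).$$ Cellwise weights $w^c_{ij}=w_1(r_{ij}/\hat\sigma_{1,j})$, rowwise weights $w^r_i=w_2(\mathrm{rt}_i/\hat\sigma_2)$, and $W(V,U,\mu)=(w_{ij})$ with $w_{ij}=w^c_{ij}w^r_im_{ij}$; also $\widetilde W(V,U,\mu)=(w^c_{ij}m_{ij})$. For a nonnegative $n\times p$ matrix $W$ the weighted objective is $\widetilde L_W(V,U,\mu)=\sum_{i,j}w_{ij}(x_{ij}-\mu_j-u_i^Tv_j)^2$. For an $n\times p$ matrix $A$, $A^j$ denotes the $n\times n$ diagonal matrix with the $j$-th column of $A$ on the diagonal and $A_i$ the $p\times p$ diagonal matrix with the $i$-th row of $A$ on the diagonal; $x^j$ is the $j$-th column and $x_i$ the $i$-th row (as column vector) of $X$; ${}^\dagger$ is the Moore–Penrose inverse. Iteration. Start from any $(V_0,U_0,\mu_0)$. Given $(V_k,U_k,\mu_k)$,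 let $W_k=W(V_k,U_k,\mu_k)$, $\widetilde W_k=\widetilde W(V_k,U_k,\mu_k)$ and (a) for each $j$, the $j$-th row of $V_{k+1}$ is $\big(U_k^TW_k^jU_k\big)^\dagger U_k^TW_k^j\big(x^j-(\mu_k)_j1_n\big)$; (b) for each $i$, the $i$-th row of $U_{k+1}$ is $\big(V_{k+1}^T(\widetilde W_k)_iV_{k+1}\big)^\dagger V_{k+1}^T(\widetilde W_k)_i(x_i-\mu_k)$; (c) for each $j$, $(\mu_{k+1})_j=\dfrac{\sum_i (W_k)_{ij}\big(x_{ij}-(U_{k+1}V_{k+1}^T)_{ij}\big)}{\sum_i (W_k)_{ij}}$. *)

(* Defs.v *)
From HB Require Import structures.
From mathcomp Require Import all_boot all_order all_algebra.
From mathcomp Require Import all_classical all_reals all_analysis.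
Set Implicit Arguments. Unset Strict Implicit. Unset Printing Implicit Defensive.
Import Order.TTheory GRing.Theory Num.Theory.
Local Open Scope ring_scope.

Section Defs.
Variable R : realType.

Definition coshR (x : R) : R := (expR x + expR (- x)) / 2.
Definition tanhR (x : R) : R := (expR x - expR (- x)) / (expR x + expR (- x)).

Definition rho_admissible (b c q1 q2 : R) : Prop :=
  [/\ 0 < b, b < c, 0 < q1, 0 < q2 & q1 * tanhR (q2 * (c - b)) = b].

Definition rho_d (b c q1 q2 : R) : R :=
  b ^+ 2 / 2 + (q1 / q2) * ln (coshR (q2 * (c - b))).

Definition rho (b c q1 q2 : R) (z : R) : R :=
  if `|z| <= b then z ^+ 2 / 2
  else if `|z| <= c then rho_d b c q1 q2 - (q1 / q2) * ln (coshR (q2 * (c - `|z|)))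
  else rho_d b c q1 q2.

Definition psi (b c q1 q2 : R) (z : R) : R :=
  if `|z| <= b then z
  else if `|z| <= c then q1 * tanhR (q2 * (c - `|z|)) * Num.sg z
  else 0.

Definition wfun (b c q1 q2 : R) (z : R) : R :=
  if z == 0 then 1 else psi b c q1 q2 z / z.

(* Moore--Penrose inverse, characterized by the four Penrose conditions
   (which determine it uniquely). *)
Definition is_MP_inverse (k : nat) (A B : 'M[R]_k) : Prop :=
  [/\ A *m B *m A = A, B *m A *m B = B,
      (A *m B)^T = A *m B & (B *m A)^T = B *m A].

Variables (n p q : nat).
Variables (X : 'M[R]_(n, p)) (M : 'M[bool]_(n, p)).
Variables (sigma1 : 'I_p -> R) (sigma2 : R).
Variables (b1 c1 q11 q12 b2 c2 q21 q22 : R).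

Definition mij (i : 'I_n) (j : 'I_p) : R := (M i j)%:R.
Definition mrow (i : 'I_n) : R := \sum_j mij i j.
Definition mtot : R := \sum_i mrow i.

Definition xhat (V : 'M[R]_(p, q)) (U : 'M[R]_(n, q)) (mu : 'rV[R]_p) i j : R :=
  mu 0 j + (U *m V^T) i j.
Definition resid V U mu i j : R := X i j - xhat V U mu i j.

Definition rt V U mu (i : 'I_n) : R :=
  Num.sqrt ((mrow i)^-1 *
    \sum_j mij i j * sigma1 j ^+ 2 * rho b1 c1 q11 q12 (resid V U mu i j / sigma1 j)).

Definition objL V U mu : R :=
  sigma2 ^+ 2 / mtot *
    \sum_i mrow i * rho b2 c2 q21 q22 (rt V U mu i / sigma2).

Definition wcell V U mu i j : R := wfun b1 c1 q11 q12 (resid V U mu i j / sigma1 j).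
Definition wrow V U mu i : R := wfun b2 c2 q21 q22 (rt V U mu i / sigma2).

Definition Wmat V U mu : 'M[R]_(n, p) :=
  \matrix_(i, j) (wcell V U mu i j * wrow V U mu i * mij i j).
Definition Wtmat V U mu : 'M[R]_(n, p) :=
  \matrix_(i, j) (wcell V U mu i j * mij i j).

Definition iter_step (V : 'M[R]_(p, q)) (U : 'M[R]_(n, q)) (mu : 'rV[R]_p)
    (V' : 'M[R]_(p, q)) (U' : 'M[R]_(n, q)) (mu' : 'rV[R]_p) : Prop :=
  let W := Wmat V U mu in
  let Wt := Wtmat V U mu in
  [/\
      forall j : 'I_p,
        let Wj : 'M[R]_n := diag_mx (\row_i W i j) in
        exists B : 'M[R]_q,
          is_MP_inverse (U^T *m Wj *m U) B /\
          (row j V')^T = B *m (U^T *m Wj *m (\col_i (X i j - mu 0 j))),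
      forall i : 'I_n,
        let Wi : 'M[R]_p := diag_mx (\row_j Wt i j) in
        exists B : 'M[R]_q,
          is_MP_inverse (V'^T *m Wi *m V') B /\
          (row i U')^T = B *m (V'^T *m Wi *m (\col_j (X i j - mu 0 j)))
    &
      forall j : 'I_p,
        mu' 0 j = (\sum_i W i j * (X i j - (U' *m V'^T) i j)) / (\sum_i W i j)].

End Defs.

(* Main.v *)
Require Import Defs.
From HB Require Import structures.
From mathcomp Require Import all_boot all_order all_algebra.
From mathcomp Require Import all_classical all_reals all_analysis.
From mathcomp Require Import ring lra.
Import Order.TTheory GRing.Theory Num.Theory.
Local Open Scope ring_scope.
Set Implicit Arguments. Unset Strict Implicit.

Section Scalar.
Variable R : realType.

Lemma coshR_gt0 (x : R) : 0 < coshR x.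
Proof. rewrite /coshR; apply: divr_gt0 => //; apply: addr_gt0; exact: expR_gt0. Qed.

Lemma cosh_tangent (x y : R) :
  coshR y * expR (tanhR y * (x - y)) <= coshR x.
Proof.
set E := expR y; set e := expR (- y); set D := x - y.
set m := tanhR y * D.
have hE : 0 < E by exact: expR_gt0.
have he : 0 < e by exact: expR_gt0.
have hm : 0 < expR m by exact: expR_gt0.
have hx : expR x = E * expR D by rewrite /E /D -expRD; congr expR; ring.
have hnx : expR (- x) = e * expR (- D) by rewrite /e /D -expRD; congr expR; ring.
have h1 : expR D >= expR m * (1 + (D - m)).
  have -> : expR D = expR m * expR (D - m) by rewrite -expRD; congr expR; ring.
  by rewrite ler_pM2l // expR_ge1Dx.
have h2 : expR (- D) >= expR m * (1 + (- D - m)).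
  have -> : expR (- D) = expR m * expR (- D - m) by rewrite -expRD; congr expR; ring.
  by rewrite ler_pM2l // expR_ge1Dx.
have hEe : 0 < E + e by exact: addr_gt0.
have hmE : m * (E + e) = D * (E - e).
  rewrite /m /tanhR -/E -/e.
  have hne : E + e != 0 by rewrite gt_eqF.
  by field.
rewrite /coshR hx hnx -/E -/e.
rewrite mulrAC ler_pM2r ?invr_gt0 //.
have : expR m * (E * (1 + (D - m)) + e * (1 + (- D - m))) = expR m * (E + e).
  congr (_ * _). have : E * (1 + (D - m)) + e * (1 + (- D - m)) = E + e + D * (E - e) - m * (E + e) by ring.
  by rewrite hmE => ->; ring.
move=> hh; rewrite mulrC -hh.
rewrite mulrDr [expR m * (E * _)]mulrCA [expR m * (e * _)]mulrCA.
apply: lerD; rewrite ler_pM2l //.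
Qed.

Lemma lncosh_tangent (x y : R) :
  ln (coshR y) + tanhR y * (x - y) <= ln (coshR x).
Proof.
have := cosh_tangent x y.
rewrite -ler_ln ?posrE ?coshR_gt0 ?mulr_gt0 ?coshR_gt0 ?expR_gt0 //.
rewrite lnM ?posrE ?coshR_gt0 ?expR_gt0 // expRK.
  exact: id.
by apply: addr_gt0; exact: expR_gt0.
Qed.
End Scalar.

Section Scalar2.
Variable R : realType.
Variables (b c q1 q2 : R).
Hypothesis adm : rho_admissible b c q1 q2.

Let T (u : R) := tanhR (q2 * (c - u)).
Let F (u : R) := q1 / q2 * ln (coshR (q2 * (c - u))).

Lemma tanh_ge0 (x : R) : 0 <= x -> 0 <= tanhR x.
Proof.
move=> hx; rewrite /tanhR; apply: divr_ge0.
  by rewrite subr_ge0 ler_expR; lra.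
by apply: addr_ge0; apply: ltW; apply: expR_gt0.
Qed.

Lemma tanh_le (x y : R) : x <= y -> tanhR x <= tanhR y.
Proof.
move=> hxy; rewrite /tanhR.
have h1 := expR_gt0 x; have h2 := expR_gt0 (- x).
have h3 := expR_gt0 y; have h4 := expR_gt0 (- y).
rewrite ler_pdivrMr ?addr_gt0 // mulrAC ler_pdivlMr ?addr_gt0 //.
have e1 : expR x * expR (- y) <= expR y * expR (- x).
  rewrite -!expRD ler_expR; lra.
nra.
Qed.

Lemma K1 (u v : R) : F u + q1 * T u * (u - v) <= F v.
Proof.
case: adm => hb hbc hq1 hq2 _.
have := @lncosh_tangent R (q2 * (c - v)) (q2 * (c - u)).
rewrite /F /T => h.
have : q1 / q2 * (ln (coshR (q2 * (c - u))) + tanhR (q2 * (c - u)) * (q2 * (c - v) - q2 * (c - u)))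
       <= q1 / q2 * ln (coshR (q2 * (c - v))).
  by rewrite ler_pM2l ?divr_gt0.
set L1 := ln _; set L2 := ln _; set th := tanhR _.
have -> : q1 / q2 * (L1 + th * (q2 * (c - v) - q2 * (c - u))) = q1 / q2 * L1 + q1 * th * (u - v).
  by field; rewrite gt_eqF.
by [].
Qed.

Lemma Fc : F c = 0.
Proof. by rewrite /F subrr mulr0 /coshR oppr0 expR0 -[1 + 1]/2 divff // ln1 mulr0. Qed.

Lemma qTb : q1 * T b = b.
Proof. by case: adm. Qed.

Lemma T_ge0 u : u <= c -> 0 <= T u.
Proof. case: adm => hb hbc hq1 hq2 _ hu; apply: tanh_ge0; apply: mulr_ge0; lra. Qed.

Lemma T_le u : b <= u -> T u <= T b.
Proof. case: adm => hb hbc hq1 hq2 _ hu; apply: tanh_le; rewrite ler_pM2l //; lra. Qed.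

Definition rhoA (u : R) := if u <= b then u ^+ 2 / 2
  else if u <= c then rho_d b c q1 q2 - F u else rho_d b c q1 q2.
Definition wA (u : R) := if u <= b then 1 else if u <= c then q1 * T u / u else 0.

Lemma rhoE z : rho b c q1 q2 z = rhoA `|z|.
Proof. by rewrite /rho /rhoA real_normK // num_real. Qed.

Lemma wE z : wfun b c q1 q2 z = wA `|z|.
Proof.
case: adm => hb hbc hq1 hq2 _.
rewrite /wfun /wA /psi; case: eqP => [->|/eqP hz]; first by rewrite normr0 ltW.
case: ifP => h1; first by rewrite divff.
case: ifP => h2; last by rewrite mul0r.
rewrite -/(T `|z|).
have hn : `|z| != 0 by rewrite normr_eq0.
have e : Num.sg z / z = `|z|^-1.
  apply: (mulIf hz); rewrite divfK //.
  by rewrite [X in _ = _ * X]numEsg mulrCA mulVf // mulr1.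
by rewrite -mulrA e.
Qed.

Lemma wA_ge0 u : 0 <= u -> 0 <= wA u.
Proof.
case: adm => hb hbc hq1 hq2 _ hu.
rewrite /wA; case: ifP => h1 //; case: ifP => h2 //.
apply: divr_ge0 => //; apply: mulr_ge0; [lra|apply: T_ge0; lra].
Qed.

Lemma core (s t : R) : 0 <= s -> 0 <= t ->
  rhoA t <= rhoA s + wA s / 2 * (t ^+ 2 - s ^+ 2).
Proof.
case: adm => hb hbc hq1 hq2 hT hs ht.
have qTb := qTb.
have hFc := Fc.
rewrite /rhoA /wA /rho_d -/(F b).
have [hsb|hsb] := boolP (s <= b); rewrite ?hsb ?(negbTE hsb);
have [htb|htb] := boolP (t <= b); rewrite ?htb ?(negbTE htb);
rewrite -?ltNge in hsb htb.
- lra.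
- have hk := K1 b t. rewrite qTb in hk.
  have [htc|htc] := boolP (t <= c); rewrite ?htc ?(negbTE htc) -?ltNge in htc.
    have e : 0 <= (t - b) ^+ 2 by exact: sqr_ge0.
    nra.
  have hk2 := K1 b c; rewrite qTb hFc in hk2.
  have e : 0 <= (c - b) ^+ 2 by exact: sqr_ge0.
  nra.
- have [hsc|hsc] := boolP (s <= c); rewrite ?hsc ?(negbTE hsc) -?ltNge in hsc.
    have Ts0 := T_ge0 hsc.
    have Tsb := T_le (ltW hsb).
    have hs0 : 0 < s by lra.
    set k := q1 * T s / s.
    have hks : k * s = q1 * T s by rewrite /k divfK // gt_eqF.
    have hk0 : 0 <= k by rewrite /k divr_ge0 // mulr_ge0 //; lra.
    have hk1 : k <= 1.
      rewrite /k ler_pdivrMr // mul1r. have : q1 * T s <= q1 * T b by rewrite ler_pM2l.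
      lra.
    have hK := K1 s b. rewrite -hks in hK.
    have e1 : 0 <= k * (b - s) ^+ 2 by apply: mulr_ge0 => //; exact: sqr_ge0.
    have e2 : 0 <= (1 - k) * (b ^+ 2 - t ^+ 2).
      apply: mulr_ge0; first lra. rewrite subr_ge0 ler_sqr ?nnegrE //; lra.
    nra.
  have hK1 := K1 c b. rewrite hFc /T subrr mulr0 /tanhR oppr0 subrr mul0r mulr0 mul0r add0r in hK1.
  have : t ^+ 2 <= b ^+ 2 by rewrite ler_sqr ?nnegrE //; lra.
  lra.
- have [hsc|hsc] := boolP (s <= c); rewrite ?hsc ?(negbTE hsc) -?ltNge in hsc;
  have [htc|htc] := boolP (t <= c); rewrite ?htc ?(negbTE htc) -?ltNge in htc.
  + have Ts0 := T_ge0 hsc.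
    have hs0 : 0 < s by lra.
    set k := q1 * T s / s.
    have hks : k * s = q1 * T s by rewrite /k divfK // gt_eqF.
    have hk0 : 0 <= k by rewrite /k divr_ge0 // mulr_ge0 //; lra.
    have hK := K1 s t. rewrite -hks in hK.
    have e1 : 0 <= k * (t - s) ^+ 2 by apply: mulr_ge0 => //; exact: sqr_ge0.
    nra.
  + have Ts0 := T_ge0 hsc.
    have hs0 : 0 < s by lra.
    set k := q1 * T s / s.
    have hks : k * s = q1 * T s by rewrite /k divfK // gt_eqF.
    have hk0 : 0 <= k by rewrite /k divr_ge0 // mulr_ge0 //; lra.
    have hK := K1 s c. rewrite -hks hFc in hK.
    have e1 : 0 <= k * (t - s) * (t + s - 2 * s).
      apply: mulr_ge0; [apply: mulr_ge0 => //|]; lra.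
    have e2 : 0 <= k * (t - c) by apply: mulr_ge0 => //; lra.
    nra.
  + have hK2 := K1 c t. rewrite hFc /T subrr mulr0 /tanhR oppr0 subrr mul0r mulr0 mul0r add0r in hK2.
    lra.
  + lra.
Qed.

Lemma rho_major z z' :
  rho b c q1 q2 z' <= rho b c q1 q2 z + wfun b c q1 q2 z / 2 * (z' ^+ 2 - z ^+ 2).
Proof.
by rewrite !rhoE wE -(real_normK (num_real z)) -(real_normK (num_real z')) core.
Qed.

Lemma wfun_ge0 z : 0 <= wfun b c q1 q2 z.
Proof. by rewrite wE wA_ge0. Qed.

End Scalar2.

Section LS.
Variable R : realType.

Lemma diag_quad (m k : nat) (K : 'M[R]_(k, m)) (w : 'rV[R]_m) a :
  (K *m diag_mx w *m K^T) a a = \sum_i w 0 i * K a i ^+ 2.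
Proof.
rewrite mul_mx_diag !mxE; apply: eq_bigr => i0 _; rewrite !mxE. ring.
Qed.

Lemma ABc_eq (m k : nat) (G : 'M[R]_(m, k)) (w : 'rV[R]_m) (y : 'cV[R]_m) (B : 'M[R]_k) :
  (forall i, 0 <= w 0 i) -> is_MP_inverse (G^T *m diag_mx w *m G) B ->
  (G^T *m diag_mx w *m G) *m B *m (G^T *m diag_mx w *m y) = G^T *m diag_mx w *m y.
Proof.
move=> hw [hABA _ _ _].
set A := G^T *m diag_mx w *m G.
set P : 'M[R]_k := 1%:M - A *m B.
set K := P *m G^T.
have hPA : P *m A = 0 by rewrite /P mulmxBl mul1mx hABA subrr.
have H : K *m diag_mx w *m K^T = 0.
  have -> : K *m diag_mx w *m K^T = (P *m A) *m P^T.
    by rewrite /K /A trmx_mul trmxK !mulmxA.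
  by rewrite hPA mul0mx.
have hwK : forall a i, w 0 i * K a i = 0.
  move=> a i.
  have := diag_quad K w a; rewrite H mxE => /esym h.
  have hnn : forall j : 'I_m, true -> 0 <= w 0 j * K a j ^+ 2.
    by move=> j _; apply: mulr_ge0 => //; exact: sqr_ge0.
  have h3 : w 0 i * K a i ^+ 2 = 0 := psumr_eq0P hnn h isT.
  have : (w 0 i * K a i) * (w 0 i * K a i) = 0.
    by rewrite mulrACA -expr2 -mulrA h3 mulr0.
  by move/eqP; rewrite mulf_eq0 orbb => /eqP.
have hPc : P *m (G^T *m diag_mx w *m y) = 0.
  rewrite !mulmxA -/K; apply/matrixP => a j.
  rewrite mul_mx_diag !mxE big1 // => i _; rewrite !mxE.
  have := hwK a i; rewrite mxE => hh.
  by rewrite [_ * w 0 i]mulrC hh mul0r.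
apply/eqP; rewrite eq_sym -subr_eq0; apply/eqP.
by rewrite -hPc /P mulmxBl mul1mx -mulmxA.
Qed.

Lemma ls_min (m k : nat) (G : 'M[R]_(m, k)) (w : 'rV[R]_m) (y : 'cV[R]_m) (B : 'M[R]_k)
  (v : 'cV[R]_k) :
  (forall i, 0 <= w 0 i) -> is_MP_inverse (G^T *m diag_mx w *m G) B ->
  \sum_i w 0 i * (y i 0 - (G *m (B *m (G^T *m diag_mx w *m y))) i 0) ^+ 2
  <= \sum_i w 0 i * (y i 0 - (G *m v) i 0) ^+ 2.
Proof.
move=> hw hB.
have hABc := ABc_eq y hw hB.
set c := G^T *m diag_mx w *m y in hABc *.
set vs := B *m c.
set e := y - G *m vs.
set g := G *m (v - vs).
have hN : G^T *m diag_mx w *m e = 0.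
  rewrite /e mulmxBr /vs. 
  have -> : G^T *m diag_mx w *m (G *m (B *m c)) = G^T *m diag_mx w *m G *m B *m c.
    by rewrite !mulmxA.
  by rewrite hABc subrr.
have hcross : \sum_i g i 0 * w 0 i * e i 0 = 0.
  have : ((v - vs)^T *m (G^T *m diag_mx w *m e)) 0 0 = 0 by rewrite hN mulmx0 mxE.
  rewrite !mulmxA -trmx_mul -/g mul_mx_diag mxE => h.
  apply: (etrans _ h); apply: eq_bigr => i0 _; by rewrite !mxE.
have hGv : forall i, (G *m v) i 0 = (G *m vs) i 0 + g i 0.
  by move=> i; rewrite /g mulmxBr !mxE; ring.
have he : forall i, e i 0 = y i 0 - (G *m vs) i 0 by move=> i; rewrite !mxE.
have heq : \sum_i w 0 i * (y i 0 - (G *m v) i 0) ^+ 2 =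
  \sum_i w 0 i * (y i 0 - (G *m vs) i 0) ^+ 2 + \sum_i w 0 i * g i 0 ^+ 2
    - 2 * \sum_i g i 0 * w 0 i * e i 0.
  rewrite mulr_sumr -big_split -sumrB /=; apply: eq_bigr => i _.
  rewrite hGv he; ring.
rewrite heq hcross mulr0 subr0 lerDl.
by apply: sumr_ge0 => i _; apply: mulr_ge0 => //; exact: sqr_ge0.
Qed.

Lemma wmean (I : finType) (W a : I -> R) (mu : R) :
  (forall i, 0 <= W i) -> 0 < \sum_i W i ->
  \sum_i W i * (a i - (\sum_i W i * a i) / (\sum_i W i)) ^+ 2
  <= \sum_i W i * (a i - mu) ^+ 2.
Proof.
move=> hW hS.
set S := \sum_i W i; set Sa := \sum_i W i * a i; set ms := Sa / S.
have hSa : Sa = ms * S by rewrite /ms divfK // gt_eqF.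
rewrite -subr_ge0 -sumrB.
have -> : \sum_i (W i * (a i - mu) ^+ 2 - W i * (a i - ms) ^+ 2) =
  \sum_i ((2 * (ms - mu)) * (W i * a i) + (mu ^+ 2 - ms ^+ 2) * W i).
  by apply: eq_bigr => i _; ring.
rewrite big_split /= -!mulr_sumr -/S -/Sa hSa.
have -> : 2 * (ms - mu) * (ms * S) + (mu ^+ 2 - ms ^+ 2) * S = S * (ms - mu) ^+ 2 by ring.
by apply: mulr_ge0; [exact: ltW|exact: sqr_ge0].
Qed.

End LS.

Section LS2.
Variable R : realType.
Lemma ls_min' (m k : nat) (G : 'M[R]_(m, k)) (w y : 'I_m -> R) (B : 'M[R]_k)
  (v : 'cV[R]_k) :
  (forall i, 0 <= w i) -> is_MP_inverse (G^T *m diag_mx (\row_i w i) *m G) B ->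
  \sum_i w i * (y i - (G *m (B *m (G^T *m diag_mx (\row_i w i) *m \col_i y i))) i 0) ^+ 2
  <= \sum_i w i * (y i - (G *m v) i 0) ^+ 2.
Proof.
move=> hw hB.
have hw' : forall i, 0 <= (\row_i w i) 0 i by move=> i; rewrite mxE.
have := ls_min (\col_i y i) v hw' hB.
set L1 := \sum_i _; set L2 := \sum_i _ => h.
have e1 : L1 = \sum_i w i * (y i - (G *m (B *m (G^T *m diag_mx (\row_i w i) *m \col_i y i))) i 0) ^+ 2.
  by apply: eq_bigr => i _; rewrite !mxE.
have e2 : L2 = \sum_i w i * (y i - (G *m v) i 0) ^+ 2.
  by apply: eq_bigr => i _; rewrite !mxE.
by rewrite -e1 -e2.
Qed.
Lemma eqle (x y : R) : x = y -> x <= y. Proof. by move=> ->. Qed.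
End LS2.

Section Main.
Variable R : realType.
Variables (n p q : nat) (X : 'M[R]_(n, p)) (M : 'M[bool]_(n, p)).
Variables (sigma1 : 'I_p -> R) (sigma2 : R) (b1 c1 q11 q12 b2 c2 q21 q22 : R).
Hypothesis hM : forall i : 'I_n, (1 <= \sum_(j < p) M i j)%N.
Hypothesis hs1 : forall j, 0 < sigma1 j.
Hypothesis hs2 : 0 < sigma2.
Hypothesis adm1 : rho_admissible b1 c1 q11 q12.
Hypothesis adm2 : rho_admissible b2 c2 q21 q22.

Lemma mulrow_entry (U : 'M[R]_(n, q)) (V : 'M[R]_(p, q)) i j :
  (U *m (row j V)^T) i 0 = (U *m V^T) i j.
Proof. by rewrite !mxE; apply: eq_bigr => a _; rewrite !mxE. Qed.

Lemma mulrow_entry2 (U : 'M[R]_(n, q)) (V : 'M[R]_(p, q)) i j :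
  (V *m (row i U)^T) j 0 = (U *m V^T) i j.
Proof. by rewrite !mxE; apply: eq_bigr => a _; rewrite !mxE mulrC. Qed.

Lemma mij_ge0 i j : 0 <= mij R M i j.
Proof. by rewrite /mij ler0n. Qed.

Lemma mrow_gt0 i : 0 < mrow R M i.
Proof.
rewrite /mrow /mij -natr_sum ltr0n; exact: hM.
Qed.

Lemma mtot_ge0 : 0 <= mtot R M.
Proof. by apply: sumr_ge0 => i _; apply: ltW; exact: mrow_gt0. Qed.

Lemma rho_ge0 (b c q1 q2 z : R) : rho_admissible b c q1 q2 -> 0 <= rho b c q1 q2 z.
Proof.
move=> adm.
have := rho_major adm z 0.
have -> : rho b c q1 q2 0 = 0.
  rewrite /rho normr0; case: adm => hb _ _ _ _; rewrite ltW //; by rewrite expr0n /= mul0r.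
have := wfun_ge0 adm z.
have := sqr_ge0 z.
set w := wfun _ _ _ _ z; set r := rho _ _ _ _ z.
rewrite expr0n /= sub0r => h1 h2 h3.
have : 0 <= w / 2 * z ^+ 2 by apply: mulr_ge0 => //; apply: divr_ge0.
lra.
Qed.

Notation Wm := (Wmat X M sigma1 sigma2 b1 c1 q11 q12 b2 c2 q21 q22).
Notation Wtm := (Wtmat X M sigma1 b1 c1 q11 q12).
Notation wr := (wrow X M sigma1 sigma2 b1 c1 q11 q12 b2 c2 q21 q22).
Notation wc := (wcell X sigma1 b1 c1 q11 q12).
Notation obj := (objL X M sigma1 sigma2 b1 c1 q11 q12 b2 c2 q21 q22).

Lemma W_Wt (V : 'M[R]_(p, q)) (U : 'M[R]_(n, q)) (mu : 'rV[R]_p) i j : Wm V U mu i j = wr V U mu i * Wtm V U mu i j.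
Proof. rewrite /Wmat /Wtmat !mxE; ring. Qed.

Lemma wr_ge0 (V : 'M[R]_(p, q)) (U : 'M[R]_(n, q)) (mu : 'rV[R]_p) i : 0 <= wr V U mu i.
Proof. exact: wfun_ge0. Qed.

Lemma wc_ge0 (V : 'M[R]_(p, q)) (U : 'M[R]_(n, q)) (mu : 'rV[R]_p) i j : 0 <= wc V U mu i j.
Proof. exact: wfun_ge0. Qed.

Lemma Wt_ge0 (V : 'M[R]_(p, q)) (U : 'M[R]_(n, q)) (mu : 'rV[R]_p) i j : 0 <= Wtm V U mu i j.
Proof. rewrite /Wtmat mxE; apply: mulr_ge0; [exact: wc_ge0|exact: mij_ge0]. Qed.

Lemma W_ge0 (V : 'M[R]_(p, q)) (U : 'M[R]_(n, q)) (mu : 'rV[R]_p) i j : 0 <= Wm V U mu i j.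
Proof. rewrite W_Wt; apply: mulr_ge0; [exact: wr_ge0|exact: Wt_ge0]. Qed.

Lemma Lt_decr (V : 'M[R]_(p, q)) (U : 'M[R]_(n, q)) (mu : 'rV[R]_p)
  (V' : 'M[R]_(p, q)) (U' : 'M[R]_(n, q)) (mu' : 'rV[R]_p) :
  iter_step X M sigma1 sigma2 b1 c1 q11 q12 b2 c2 q21 q22 V U mu V' U' mu' ->
  (forall j, 0 < \sum_i Wm V U mu i j) ->
  \sum_i \sum_j Wm V U mu i j * resid X V' U' mu' i j ^+ 2
  <= \sum_i \sum_j Wm V U mu i j * resid X V U mu i j ^+ 2.
Proof.
move=> [ha hb hc] hpos.
have st1 : \sum_i \sum_j Wm V U mu i j * resid X V' U mu i j ^+ 2
  <= \sum_i \sum_j Wm V U mu i j * resid X V U mu i j ^+ 2.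
  rewrite [X in X <= _]exchange_big [X in _ <= X]exchange_big /=.
  apply: ler_sum => j _.
  have [B [hMP hrow]] := ha j.
  have hw : forall i, 0 <= (fun i => Wm V U mu i j) i by move=> i; exact: W_ge0.
  have := ls_min' (fun i => X i j - mu 0 j) ((row j V)^T) hw hMP.
  rewrite -hrow => h.
  apply: le_trans (le_trans _ h) _; apply: eqle; apply: eq_bigr => i _;
    by rewrite mulrow_entry /resid /xhat opprD addrA.
have st2 : \sum_i \sum_j Wm V U mu i j * resid X V' U' mu i j ^+ 2
  <= \sum_i \sum_j Wm V U mu i j * resid X V' U mu i j ^+ 2.
  apply: ler_sum => i _.
  have e : forall U2 : 'M[R]_(n, q), \sum_j Wm V U mu i j * resid X V' U2 mu i j ^+ 2 =
     wr V U mu i * \sum_j Wtm V U mu i j * resid X V' U2 mu i j ^+ 2.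
    by move=> U2; rewrite mulr_sumr; apply: eq_bigr => j _; rewrite W_Wt mulrA.
  rewrite !e; apply: ler_wpM2l; first exact: wr_ge0.
  have [B [hMP hrow]] := hb i.
  have hw : forall j, 0 <= (fun j => Wtm V U mu i j) j by move=> j; exact: Wt_ge0.
  have := ls_min' (fun j => X i j - mu 0 j) ((row i U)^T) hw hMP.
  rewrite -hrow => h.
  apply: le_trans (le_trans _ h) _; apply: eqle; apply: eq_bigr => j _;
    by rewrite mulrow_entry2 /resid /xhat opprD addrA.
have st3 : \sum_i \sum_j Wm V U mu i j * resid X V' U' mu' i j ^+ 2
  <= \sum_i \sum_j Wm V U mu i j * resid X V' U' mu i j ^+ 2.
  rewrite [X in X <= _]exchange_big [X in _ <= X]exchange_big /=.
  apply: ler_sum => j _.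
  have hw : forall i, 0 <= (fun i => Wm V U mu i j) i by move=> i; exact: W_ge0.
  have := wmean (fun i => X i j - (U' *m V'^T) i j) (mu 0 j) hw (hpos j).
  rewrite -hc => h.
  apply: le_trans (le_trans _ h) _; apply: eqle; apply: eq_bigr => i _;
    by rewrite /resid /xhat; congr (_ * _); congr (_ ^+ 2); ring.
by apply: le_trans st3 (le_trans st2 st1).
Qed.

Lemma Wm_entry (V : 'M[R]_(p, q)) (U : 'M[R]_(n, q)) (mu : 'rV[R]_p) i j :
  Wm V U mu i j = wc V U mu i j * wr V U mu i * mij R M i j.
Proof. by rewrite /Wmat mxE. Qed.

Lemma row_abs (mi I1 I2 S w s2 r1' r2' x1 x2 : R) :
  0 < mi -> 0 <= w -> 0 < s2 -> I2 <= I1 + S ->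
  x1 = mi^-1 * I1 / s2 ^+ 2 -> x2 = mi^-1 * I2 / s2 ^+ 2 ->
  r2' <= r1' + w / 2 * (x2 - x1) ->
  mi * r2' <= mi * r1' + (4 * s2 ^+ 2)^-1 * (2 * w * S).
Proof.
move=> hmi hw hs hI -> -> h1.
have hs2' : 0 < s2 ^+ 2 by apply: exprn_gt0.
have h3 := ler_wpM2l (ltW hmi) h1.
apply: (le_trans h3).
have -> : mi * (r1' + w / 2 * (mi^-1 * I2 / s2 ^+ 2 - mi^-1 * I1 / s2 ^+ 2))
   = mi * r1' + (w / 2 / s2 ^+ 2) * (I2 - I1).
  by field; rewrite ?gt_eqF.
have -> : (4 * s2 ^+ 2)^-1 * (2 * w * S) = (w / 2 / s2 ^+ 2) * S.
  by field; rewrite ?gt_eqF.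
rewrite lerD2l; apply: ler_wpM2l; last lra.
by apply: divr_ge0; [apply: divr_ge0|apply: ltW].
Qed.

Lemma sqrt_div_sq (x s : R) : 0 <= x -> (Num.sqrt x / s) ^+ 2 = x / s ^+ 2.
Proof. by move=> hx; rewrite expr_div_n sqr_sqrtr. Qed.

Lemma row_major (V : 'M[R]_(p, q)) (U : 'M[R]_(n, q)) (mu : 'rV[R]_p)
  (V2 : 'M[R]_(p, q)) (U2 : 'M[R]_(n, q)) (mu2 : 'rV[R]_p) i :
  mrow R M i * rho b2 c2 q21 q22 (rt X M sigma1 b1 c1 q11 q12 V2 U2 mu2 i / sigma2)
  <= mrow R M i * rho b2 c2 q21 q22 (rt X M sigma1 b1 c1 q11 q12 V U mu i / sigma2)
     + (4 * sigma2 ^+ 2)^-1 * \sum_j (Wm V U mu i j * resid X V2 U2 mu2 i j ^+ 2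
                                     - Wm V U mu i j * resid X V U mu i j ^+ 2).
Proof.
pose mi := mrow R M i.
have hmi : 0 < mi by exact: mrow_gt0.
pose I1 := \sum_j mij R M i j * sigma1 j ^+ 2 * rho b1 c1 q11 q12 (resid X V U mu i j / sigma1 j).
pose I2 := \sum_j mij R M i j * sigma1 j ^+ 2 * rho b1 c1 q11 q12 (resid X V2 U2 mu2 i j / sigma1 j).
pose S := \sum_j mij R M i j * wc V U mu i j / 2 * (resid X V2 U2 mu2 i j ^+ 2 - resid X V U mu i j ^+ 2).
have hI : I2 <= I1 + S.
  rewrite /I1 /S -big_split /=; apply: ler_sum => j _.
  have h := rho_major adm1 (resid X V U mu i j / sigma1 j) (resid X V2 U2 mu2 i j / sigma1 j).
  have hm : 0 <= mij R M i j * sigma1 j ^+ 2 by apply: mulr_ge0; [exact: mij_ge0|exact: sqr_ge0].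
  have := ler_wpM2l hm h.
  have hs : sigma1 j != 0 by rewrite gt_eqF.
  set r1 := resid X V U mu i j; set r2 := resid X V2 U2 mu2 i j.
  rewrite /wcell -/r1.
  set w := wfun _ _ _ _ _; set A := rho _ _ _ _ (r1 / _).
  move=> h'; apply: (le_trans h'); apply: eqle; by field.
have hI1 : 0 <= mi^-1 * I1.
  rewrite mulr_ge0 ?invr_ge0 ?(ltW hmi) //.
  by apply: sumr_ge0 => j _; apply: mulr_ge0; [apply: mulr_ge0; [exact: mij_ge0|exact: sqr_ge0]|exact: rho_ge0].
have hI2 : 0 <= mi^-1 * I2.
  rewrite mulr_ge0 ?invr_ge0 ?(ltW hmi) //.
  by apply: sumr_ge0 => j _; apply: mulr_ge0; [apply: mulr_ge0; [exact: mij_ge0|exact: sqr_ge0]|exact: rho_ge0].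
have hrt1 : (rt X M sigma1 b1 c1 q11 q12 V U mu i / sigma2) ^+ 2 = mi^-1 * I1 / sigma2 ^+ 2
  := sqrt_div_sq sigma2 hI1.
have hrt2 : (rt X M sigma1 b1 c1 q11 q12 V2 U2 mu2 i / sigma2) ^+ 2 = mi^-1 * I2 / sigma2 ^+ 2
  := sqrt_div_sq sigma2 hI2.
have h1 := rho_major adm2 (rt X M sigma1 b1 c1 q11 q12 V U mu i / sigma2)
                          (rt X M sigma1 b1 c1 q11 q12 V2 U2 mu2 i / sigma2).
have hsum : \sum_j (Wm V U mu i j * resid X V2 U2 mu2 i j ^+ 2 - Wm V U mu i j * resid X V U mu i j ^+ 2)
   = 2 * wr V U mu i * S.
  rewrite /S mulr_sumr; apply: eq_bigr => j _; rewrite Wm_entry; by field.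
rewrite hsum.
exact: (row_abs hmi (wr_ge0 V U mu i) hs2 hI hrt1 hrt2 h1).
Qed.

Lemma obj_decr (V : 'M[R]_(p, q)) (U : 'M[R]_(n, q)) (mu : 'rV[R]_p)
  (V2 : 'M[R]_(p, q)) (U2 : 'M[R]_(n, q)) (mu2 : 'rV[R]_p) :
  \sum_i \sum_j Wm V U mu i j * resid X V2 U2 mu2 i j ^+ 2
  <= \sum_i \sum_j Wm V U mu i j * resid X V U mu i j ^+ 2 ->
  obj V2 U2 mu2 <= obj V U mu.
Proof.
move=> hL; rewrite /objL; apply: ler_wpM2l.
  by apply: divr_ge0; [exact: sqr_ge0|exact: mtot_ge0].
apply: le_trans (ler_sum _ (fun i _ => row_major V U mu V2 U2 mu2 i)) _.
rewrite big_split /= -mulr_sumr gerDl; apply: mulr_ge0_le0.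
  by rewrite invr_ge0; apply: mulr_ge0 => //; exact: sqr_ge0.
under eq_bigr do rewrite sumrB.
by rewrite sumrB subr_le0.
Qed.

End Main.

Unset Implicit Arguments.
Set Strict Implicit.
Theorem proposition1 (R : realType) (n p q : nat)
  (X : 'M[R]_(n, p)) (M : 'M[bool]_(n, p))
  (sigma1 : 'I_p -> R) (sigma2 : R)
  (b1 c1 q11 q12 b2 c2 q21 q22 : R)
  (Vs : nat -> 'M[R]_(p, q)) (Us : nat -> 'M[R]_(n, q)) (mus : nat -> 'rV[R]_p) :
  (forall i : 'I_n, (1 <= \sum_(j < p) M i j)%N) ->
  (forall j, 0 < sigma1 j) -> 0 < sigma2 ->
  (1 <= q)%N -> (q < p)%N ->
  rho_admissible b1 c1 q11 q12 -> rho_admissible b2 c2 q21 q22 ->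
  (forall k, iter_step X M sigma1 sigma2 b1 c1 q11 q12 b2 c2 q21 q22
               (Vs k) (Us k) (mus k) (Vs k.+1) (Us k.+1) (mus k.+1)) ->
  (forall k (j : 'I_p),
     0 < \sum_(i < n) Wmat X M sigma1 sigma2 b1 c1 q11 q12 b2 c2 q21 q22
                        (Vs k) (Us k) (mus k) i j) ->
  forall k,
    objL X M sigma1 sigma2 b1 c1 q11 q12 b2 c2 q21 q22 (Vs k.+1) (Us k.+1) (mus k.+1)
    <= objL X M sigma1 sigma2 b1 c1 q11 q12 b2 c2 q21 q22 (Vs k) (Us k) (mus k).
Proof.
move=> hM hs1 hs2 _ _ adm1 adm2 hstep hpos k.
apply: (obj_decr hM hs1 hs2 adm1 adm2).
exact: (Lt_decr adm1 adm2 (hstep k) (hpos k)).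
Qed.
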